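(* Let $S$ be a finite colored ordered set and let $(\sigma,v)\preceq(\pi,w)$ in $\mathcal Y(S)$. Write $\pi=(C_1,\dots,C_q)$, $w=w(1)\cdots w(q)$, and let $v_k$ be the restriction of the coloring $v$ to the blocks of $\sigma$ contained in $C_k$. Then there is an order isomorphism \[ \theta:[\sigma,\pi]\to Y_{v_1}^{w(1)}\times\cdots\times Y_{v_q}^{w(q)} \] (product order on the right) such that for each $\lambda\in[\sigma,\pi]$, $\lambda$ and $\theta(\lambda)=(\lambda_1,\dots,\lambda_q)$ are isomorphic colored ordered sets.
   Context: Fix a finite set of colors $\Gamma$. A colored ordered set is a finite linearly ordered set $S=(x_1<\dots<x_p)$ with a map $c_S:S\to\Gamma$, identified with the word $c_S(x_1)\cdots c_S(x_p)$; two are isomorphic if the (unique) order isomorphism between them preserves colors, i.e. they have the same color word. An (interval) partition of $S$ is a partition into nonempty blocks $B_1<\dots<B_q$ each of which is a set of consecutive elements. A colored partition $(\sigma,c_\sigma)$ of $S$ is an interval partition $\sigma=(B_1,\dots,B_q)$ together with a coloring $c_\sigma$ of its blocks such that every singleton block $\{x\}$ has color $c_S(x)$; it is regarded as the colored ordered set $(B_1<\dots<B_q)$ with coloring $c_\sigma$. $\mathcal Y(S)$ is the set of colored partitions of $S$, partially ordered by $(\sigma,v)\preceq(\pi,w)$ iff every block of $\sigma$ is contained in a block of $\pi$ and every block common to $\sigma$ and $\pi$ has the same color in both. $[\sigma,\pi]=\{\lambda:\sigma\preceq\lambda\preceq\pi\}$. For a word $v$ of length $p$ over $\Gamma$ and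 $j\in\Gamma$, consider $\mathcal Y(([p],v))$; let $\mathbf 0_v$ be the partition into singletons (colored by $v$) and $\mathbf 1_j$ the one-block partition colored $j$; $Y_v^j=[\mathbf 0_v,\mathbf 1_j]$. An element $\lambda_k\in Y_{v_k}^{w(k)}$ is a colored partition of the blocks of $\sigma$ inside $C_k$; $(\lambda_1,\dots,\lambda_q)$ is regarded as the colored ordered set obtained by concatenating the blocks of $\lambda_1,\dots,\lambda_q$ with their colors. *)

(* Defs.v *)
From mathcomp Require Import all_boot.
Set Implicit Arguments. Unset Strict Implicit. Unset Printing Implicit Defensive.

(* A finite colored ordered set S = (x_1 < ... < x_p) is represented (up to the
   unique order isomorphism) by its color word  c : seq Gamma, on the positions
   0, ..., p-1.

   An interval partition with block colors (a candidate colored partition) is a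
   sequence of pairs (block length, block color), listed left to right.  *)
Definition cpart (Gamma : Type) := seq (nat * Gamma).

Section Defs.
Variable Gamma : eqType.

Fixpoint blocks_from (s : nat) (P : cpart Gamma) : seq ((nat * nat) * Gamma) :=
  match P with
  | [::] => [::]
  | (l, g) :: P' => ((s, l), g) :: blocks_from (s + l) P'
  end.

Definition blocks (P : cpart Gamma) := blocks_from 0 P.

Definition is_cpart (c : seq Gamma) (P : cpart Gamma) : bool :=
  all (fun b => 0 < b.1) P && (sumn (map fst P) == size c) &&
  all (fun b => (b.1.2 == 1) ==> (b.2 == nth b.2 c b.1.1)) (blocks P).

Definition inside (I J : nat * nat) : bool :=
  (J.1 <= I.1) && (I.1 + I.2 <= J.1 + J.2).

Definition cp_le (P Q : cpart Gamma) : bool :=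
  all (fun b => has (fun b' => inside b.1 b'.1) (blocks Q)) (blocks P) &&
  all (fun b => all (fun b' => (b.1 == b'.1) ==> (b.2 == b'.2)) (blocks Q))
      (blocks P).

(* the colored ordered set underlying a colored partition: its color word *)
Definition cp_colors (P : cpart Gamma) : seq Gamma := map snd P.

Definition zero_cp (v : seq Gamma) : cpart Gamma := map (fun g => (1, g)) v.
Definition one_cp (v : seq Gamma) (j : Gamma) : cpart Gamma := [:: (size v, j)].

Definition in_Y (v : seq Gamma) (j : Gamma) (L : cpart Gamma) : bool :=
  [&& is_cpart v L, cp_le (zero_cp v) L & cp_le L (one_cp v j)].

Definition in_interval (c : seq Gamma) (sg pi L : cpart Gamma) : bool :=
  [&& is_cpart c L, cp_le sg L & cp_le L pi].

Definition restr_col (sg : cpart Gamma) (C : nat * nat) : seq Gamma :=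
  [seq b.2 | b <- blocks sg & inside b.1 C].

Definition in_prodY (sg pi : cpart Gamma) (Ls : seq (cpart Gamma)) : bool :=
  (size Ls == size pi) &&
  all2 (fun C L => in_Y (restr_col sg C.1) C.2 L) (blocks pi) Ls.

Definition prod_le (Ls Ms : seq (cpart Gamma)) : bool := all2 cp_le Ls Ms.

End Defs.

(* Main.v *)
Require Import Defs.
From mathcomp Require Import all_boot zify.
Set Implicit Arguments. Unset Strict Implicit. Unset Printing Implicit Defensive.

Section S.
Variable G : eqType.
Implicit Types (P Q L M S pi lam mu : cpart G) (Ls : seq (cpart G)).

Definition len P := sumn (map fst P).
Definition pos P := all (fun b => 0 < b.1) P.

Ltac dlia := repeat match goal with p : prod _ _ |- _ => destruct p end; simpl in *; lia.

Lemma len_cons a g P : len ((a,g)::P) = a + len P. Proof. by []. Qed.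
Lemma len_cat P Q : len (P ++ Q) = len P + len Q.
Proof. by rewrite /len map_cat sumn_cat. Qed.
Lemma pos_cat P Q : pos (P ++ Q) = pos P && pos Q.
Proof. exact: all_cat. Qed.

Lemma blocks_from_cat s P Q :
  blocks_from s (P ++ Q) = blocks_from s P ++ blocks_from (s + len P) Q.
Proof.
elim: P s => [|[a g] P IH] s /=; first by rewrite addn0.
by rewrite IH len_cons addnA.
Qed.

Lemma blocks_from_bound s P b : b \in blocks_from s P ->
  s <= b.1.1 /\ b.1.1 + b.1.2 <= s + len P.
Proof.
case: b => [[x y] g0] /=.
elim: P s => [|[a g] P IH] s //=.
rewrite inE => /orP[/eqP [-> -> _]|/IH [h1 h2]]; rewrite len_cons; lia.
Qed.

Lemma blocks_from_pos s P b : pos P -> b \in blocks_from s P -> 0 < b.1.2.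
Proof.
elim: P s => [|[a g] P IH] s //= /andP[ha hP].
rewrite inE => /orP[/eqP -> //|]; exact: IH.
Qed.

Definition sh t (b : (nat * nat) * G) := ((b.1.1 + t, b.1.2), b.2).

Lemma blocks_from_shift s t P :
  blocks_from (s + t) P = map (sh t) (blocks_from s P).
Proof.
elim: P s => [|[a g] P IH] s //=.
by rewrite -IH /sh /= addnAC.
Qed.

Definition cple_b (bP bQ : seq ((nat * nat) * G)) :=
  all (fun b => has (fun b' => inside b.1 b'.1) bQ) bP &&
  all (fun b => all (fun b' => (b.1 == b'.1) ==> (b.2 == b'.2)) bQ) bP.

Lemma cp_leE P Q : cp_le P Q = cple_b (blocks P) (blocks Q).
Proof. by []. Qed.

Lemma cple_b_shift t bP bQ : cple_b (map (sh t) bP) (map (sh t) bQ) = cple_b bP bQ.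
Proof.
rewrite /cple_b !all_map; congr andb; apply: eq_all => b /=.
  rewrite has_map; apply: eq_has => b' /=; rewrite /inside /=.
  by rewrite leq_add2r addnAC [_ + t + _]addnAC leq_add2r.
rewrite all_map; apply: eq_all => b' /=.
by rewrite !xpair_eqE eqn_add2r.
Qed.

Lemma cp_le_from s P Q : cple_b (blocks_from s P) (blocks_from s Q) = cp_le P Q.
Proof. by rewrite -[s]add0n !blocks_from_shift cple_b_shift. Qed.

Lemma cple_b_cat n bP1 bP2 bQ1 bQ2 :
  (forall b, b \in bP1 ++ bQ1 -> b.1.1 + b.1.2 <= n /\ 0 < b.1.2) ->
  (forall b, b \in bP2 ++ bQ2 -> n <= b.1.1 /\ 0 < b.1.2) ->
  cple_b (bP1 ++ bP2) (bQ1 ++ bQ2) = cple_b bP1 bQ1 && cple_b bP2 bQ2.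
Proof.
move=> H1 H2; rewrite /cple_b !all_cat.
have E1 : {in bP1, forall b, has (fun b' => inside b.1 b'.1) (bQ1 ++ bQ2)
                         = has (fun b' => inside b.1 b'.1) bQ1}.
  move=> b hb; rewrite has_cat; apply/orb_idr => /hasP [b' hb'].
  have := H1 b; rewrite mem_cat hb => /(_ isT) [h1 h2].
  have := H2 b'; rewrite mem_cat hb' orbT => /(_ isT) [h3 h4].
  rewrite /inside; dlia.
have E2 : {in bP2, forall b, has (fun b' => inside b.1 b'.1) (bQ1 ++ bQ2)
                         = has (fun b' => inside b.1 b'.1) bQ2}.
  move=> b hb; rewrite has_cat; apply/orb_idl => /hasP [b' hb'].
  have := H2 b; rewrite mem_cat hb => /(_ isT) [h1 h2].
  have := H1 b'; rewrite mem_cat hb' orbT => /(_ isT) [h3 h4].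
  rewrite /inside; dlia.
have F1 : {in bP1, forall b, all (fun b' => (b.1 == b'.1) ==> (b.2 == b'.2)) (bQ1 ++ bQ2)
                         = all (fun b' => (b.1 == b'.1) ==> (b.2 == b'.2)) bQ1}.
  move=> b hb; rewrite all_cat; apply/andb_idr => _; apply/allP => b' hb'.
  have := H1 b; rewrite mem_cat hb => /(_ isT) [h1 h2].
  have := H2 b'; rewrite mem_cat hb' orbT => /(_ isT) [h3 h4].
  apply/implyP => /eqP E; move: h1 h3; rewrite E; dlia.
have F2 : {in bP2, forall b, all (fun b' => (b.1 == b'.1) ==> (b.2 == b'.2)) (bQ1 ++ bQ2)
                         = all (fun b' => (b.1 == b'.1) ==> (b.2 == b'.2)) bQ2}.
  move=> b hb; rewrite all_cat; apply/andb_idl => _; apply/allP => b' hb'.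
  have := H2 b; rewrite mem_cat hb => /(_ isT) [h1 h2].
  have := H1 b'; rewrite mem_cat hb' orbT => /(_ isT) [h3 h4].
  apply/implyP => /eqP E; move: h1 h3 h4; rewrite E; dlia.
rewrite (eq_in_all E1) (eq_in_all E2) (eq_in_all F1) (eq_in_all F2).
by rewrite andbACA.
Qed.

Lemma cp_le_cat P1 P2 Q1 Q2 : pos P1 -> pos P2 -> pos Q1 -> pos Q2 ->
  len P1 = len Q1 ->
  cp_le (P1 ++ P2) (Q1 ++ Q2) = cp_le P1 Q1 && cp_le P2 Q2.
Proof.
move=> p1 p2 q1 q2 e.
rewrite !cp_leE /blocks !blocks_from_cat -e add0n.
rewrite (@cple_b_cat (len P1)) ?cp_le_from //.
  move=> b; rewrite mem_cat => /orP[] hb.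
    by have [_ h] := blocks_from_bound hb; split; [|exact: blocks_from_pos hb].
  by have [_ h] := blocks_from_bound hb; split; [rewrite e|exact: blocks_from_pos hb].
move=> b; rewrite mem_cat => /orP[] hb.
  by have [h _] := blocks_from_bound hb; split; [|exact: blocks_from_pos hb].
by have [h _] := blocks_from_bound hb; split; [|exact: blocks_from_pos hb].
Qed.


Lemma pos_take_drop j P : pos P -> pos (take j P) /\ pos (drop j P).
Proof. by rewrite -{1}(cat_take_drop j P) pos_cat => /andP. Qed.

Lemma cut_ex P s m (x : (nat * nat) * G) BQ : pos P -> m <= len P -> x.1 = (s, m) ->
  (forall b', b' \in BQ -> s + m <= b'.1.1) ->
  all (fun b => has (fun b' => inside b.1 b'.1) (x :: BQ)) (blocks_from s P) ->
  exists j, j <= size P /\ len (take j P) = m.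
Proof.
elim: P s m x => [|[a g] P IH] s m x /=.
  by move=> _ hm _ _ _; exists 0; move: hm; rewrite /len /=; split => //; lia.
move=> /andP[ha hP] hm hx hBQ /andP[hhead hall].
case: (posnP m) => [->|m0]; first by exists 0; rewrite take0.
have am : a <= m.
  move: hhead => /orP[|/hasP [b' hb' hin]].
    by rewrite hx /inside /=; lia.
  have := hBQ b' hb'; move: hin; rewrite /inside /=; dlia.
case: (eqVneq a m) => [eam|nam].
  by exists 1; rewrite /= take0 /len /= eam addn0.
have [j [hjs hj]] : exists j, j <= size P /\ len (take j P) = m - a.
  apply: (IH (s + a) (m - a) ((s + a, m - a), x.2)) => //.
  - by move: hm; rewrite len_cons; lia.
  - by move=> b' /hBQ; dlia.
  apply/allP => b hb; have [hb1 hb2] := blocks_from_bound hb.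
  move/allP: hall => /(_ b hb) /= /orP[hin|hin]; apply/orP; [left|right => //].
  by move: hin; rewrite hx /inside /=; dlia.
by exists j.+1; rewrite /= len_cons hj; split => //; lia.
Qed.

Lemma cp_le_nil P : cp_le P [::] -> P = [::].
Proof. by case: P => [|[a g] P] //; rewrite cp_leE /cple_b /blocks /=. Qed.

Definition single_ok P (h : G) := if P is [:: (_, g)] then g == h else true.

Lemma cp_le_single P m h : pos P -> len P = m -> 0 < m ->
  cp_le P [:: (m, h)] = single_ok P h.
Proof.
case: P => [|[a g] [|[b g'] P]].
- by move=> _ <-.
- rewrite /len /= addn0 => _ <- _.
  by rewrite cp_leE /cple_b /blocks /= /inside /= leqnn eqxx /=; case: (g == h).
move=> hP hl m0; rewrite [single_ok _ _]/=.
have hP' := hP; move: hP' => /= /and3P[ha hb hP''].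
set P0 := (a, g) :: _ in hP hl *; rewrite cp_leE /cple_b /blocks.
apply/andP; split; apply/allP => bb hbb; have [h1 h2] := blocks_from_bound hbb.
  by rewrite /= orbF /inside /=; move: h1 h2; rewrite hl; dlia.
rewrite /= andbT; apply/implyP => /eqP E.
move: hbb; rewrite /P0 /= !inE => /orP[/eqP E2|/orP[/eqP E2|hbb]].
- by move: E; rewrite E2 /= => -[am]; move: hl; rewrite /len /= -am; lia.
- by move: E; rewrite E2 /= => -[a0]; move: ha; lia.
have [h3 _] := blocks_from_bound hbb; move: h3; rewrite E /=; lia.
Qed.

Lemma split_le P m h Q : pos P -> 0 < m -> pos Q -> len P = m + len Q ->
  cp_le P ((m, h) :: Q) ->
  exists j, [/\ j <= size P, len (take j P) = m, single_ok (take j P) h & cp_le (drop j P) Q].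
Proof.
move=> hP m0 hQ hl hle.
have [j [hjs hj]] : exists j, j <= size P /\ len (take j P) = m.
  apply: (@cut_ex P 0 m ((0, m), h) (blocks_from m Q)) => //.
  - by rewrite hl leq_addr.
  - by move=> b' /blocks_from_bound [].
  by move: hle; rewrite cp_leE /cple_b => /andP[].
exists j; have [p1 p2] := pos_take_drop j hP.
have e : len (take j P) = len [:: (m, h)] by rewrite hj /len /= addn0.
have pm : pos [:: (m, h)] by rewrite /pos /= m0.
move: hle; rewrite -{1}(cat_take_drop j P) -[(m, h) :: Q]cat1s cp_le_cat //.
by rewrite cp_le_single // => /andP[].
Qed.

Lemma join_le P1 P2 m h Q : pos P1 -> pos P2 -> pos Q -> len P1 = m -> 0 < m ->
  single_ok P1 h -> cp_le P2 Q -> cp_le (P1 ++ P2) ((m, h) :: Q).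
Proof.
move=> p1 p2 q l1 m0 so le2.
have e : len P1 = len [:: (m, h)] by rewrite l1 /len /= addn0.
have pm : pos [:: (m, h)] by rewrite /pos /= m0.
by rewrite -[(m, h) :: Q]cat1s cp_le_cat // cp_le_single // so.
Qed.


Fixpoint dec S (lam : cpart G) : cpart G :=
  match lam with
  | [::] => [::]
  | (k, g) :: lam' => (len (take k S), g) :: dec (drop k S) lam'
  end.

Fixpoint cnt (l : nat) S : nat :=
  match S with
  | [::] => 0
  | (a, _) :: S' => if l == 0 then 0 else (cnt (l - a) S').+1
  end.

Fixpoint comp S L : cpart G :=
  match L with
  | [::] => [::]
  | (l, g) :: L' => (cnt l S, g) :: comp (drop (cnt l S) S) L'
  end.

Lemma size_dec S lam : size (dec S lam) = size lam.
Proof. by elim: lam S => [|[k g] lam IH] S //=; rewrite IH. Qed.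

Lemma colors_dec S lam : cp_colors (dec S lam) = cp_colors lam.
Proof. by elim: lam S => [|[k g] lam IH] S //=; rewrite /cp_colors /= -!/(cp_colors _) IH. Qed.

Lemma colors_comp S L : cp_colors (comp S L) = cp_colors L.
Proof. by elim: L S => [|[k g] L IH] S //=; rewrite /cp_colors /= -!/(cp_colors _) IH. Qed.

Lemma len_takeD k n S : len (take (k + n) S) = len (take k S) + len (take n (drop k S)).
Proof. by rewrite takeD len_cat. Qed.

Lemma len_dec S lam : len (dec S lam) = len (take (len lam) S).
Proof.
elim: lam S => [|[k g] lam IH] S /=; first by rewrite take0.
by rewrite len_cons IH len_cons len_takeD.
Qed.

Lemma pos_take_len S k : pos S -> 0 < k -> k <= size S -> 0 < len (take k S).
Proof. by case: S => [|[a g] S] //; case: k => // k /= /andP[ha _]; rewrite len_cons; lia. Qed.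

Lemma pos_dec S lam : pos S -> pos lam -> len lam <= size S -> pos (dec S lam).
Proof.
elim: lam S => [|[k g] lam IH] S //= hS /andP[hk hl]; rewrite len_cons => hs.
apply/andP; split; first by apply: pos_take_len => //; lia.
apply: IH => //; first by have [] := pos_take_drop k hS.
by rewrite size_drop; lia.
Qed.

Lemma dec_cat S l1 l2 : dec S (l1 ++ l2) = dec S l1 ++ dec (drop (len l1) S) l2.
Proof.
elim: l1 S => [|[k g] l1 IH] S /=; first by rewrite drop0.
by rewrite IH drop_drop len_cons addnC.
Qed.

Lemma take_dec j S lam : take j (dec S lam) = dec S (take j lam).
Proof.
elim: lam S j => [|[k g] lam IH] S [|j] //=; by rewrite IH.
Qed.

Lemma drop_dec j S lam : drop j (dec S lam) = dec (drop (len (take j lam)) S) (drop j lam).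
Proof.
elim: lam S j => [|[k g] lam IH] S [|j] //=; rewrite ?take0 ?drop0 //.
by rewrite IH drop_drop len_cons addnC.
Qed.

Lemma dec_zero S : dec S (zero_cp (cp_colors S)) = S.
Proof.
elim: S => [|[a g] S IH] //=.
by rewrite take0 drop0 IH /len /= addn0.
Qed.

Lemma dec_one S h : dec S [:: (size S, h)] = [:: (len S, h)].
Proof. by rewrite /= take_size. Qed.

Lemma cnt_take S k : pos S -> k <= size S -> cnt (len (take k S)) S = k.
Proof.
elim: S k => [|[a g] S IH] [|k] //=.
move=> /andP[ha hS] hk; rewrite len_cons.
have -> : (a + len (take k S) == 0) = false by apply/negbTE; lia.
by rewrite addKn IH.
Qed.

Lemma cnt_cat A B : pos A -> cnt (len A) (A ++ B) = size A.
Proof.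
elim: A => [|[a g] A IH] /=; first by case: B => [|[]]. 
move=> /andP[ha hA]; rewrite len_cons.
have -> : (a + len A == 0) = false by apply/negbTE; lia.
by rewrite addKn IH.
Qed.

Lemma comp_dec S lam : pos S -> pos lam -> len lam <= size S -> comp S (dec S lam) = lam.
Proof.
elim: lam S => [|[k g] lam IH] S //= hS /andP[hk hl]; rewrite len_cons => hs.
rewrite cnt_take //; last by lia.
rewrite IH //; first by have [] := pos_take_drop k hS.
by rewrite size_drop; lia.
Qed.

Lemma len_take_inj S a b : pos S -> a <= size S -> b <= size S ->
  len (take a S) = len (take b S) -> a = b.
Proof. by move=> hS ha hb e; rewrite -(cnt_take hS ha) e cnt_take. Qed.

Lemma pos_len0 P : pos P -> len P = 0 -> P = [::].
Proof. by case: P => [|[a g] P] //= /andP[ha _]; rewrite len_cons; lia. Qed.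

Lemma len_take_le j P : len (take j P) <= len P.
Proof. by rewrite -{2}(cat_take_drop j P) len_cat leq_addr. Qed.

Lemma single_ok_dec S lam h : single_ok (dec S lam) h = single_ok lam h.
Proof. by case: lam => [|[k g] [|[? ?] ?]]. Qed.

Lemma dec_surj S L : pos S -> pos L -> len L = len S -> cp_le S L ->
  exists lam, [/\ pos lam, len lam = size S & L = dec S lam].
Proof.
elim: L S => [|[l g] L IH] S hS hL hl hle.
  by exists [::]; rewrite (pos_len0 hS) //.
move: hL => /= /andP[l0 hL].
have [j [hjs hj _ hle2]] := split_le hS l0 hL (esym hl) hle.
have [p1 p2] := pos_take_drop j hS.
have hl2 : len L = len (drop j S).
  by move: hl; rewrite -{1}(cat_take_drop j S) len_cat len_cons hj; lia.
have [lam [pl ll el]] := IH _ p2 hL hl2 hle2.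
exists ((j, g) :: lam); split.
- rewrite /= pl andbT; case: (posnP j) => [j0|//].
  by move: hj l0; rewrite j0 take0 => <-.
- by rewrite len_cons ll size_drop; lia.
by rewrite /= hj -el.
Qed.

Lemma dec_le S lam mu : pos S -> pos lam -> pos mu -> len lam = size S -> len mu = size S ->
  cp_le (dec S lam) (dec S mu) = cp_le lam mu.
Proof.
elim: mu S lam => [|[k h] mu IH] S lam hS hlam hmu hl hm.
  have S0 : S = [::] by apply: size0nil; rewrite -hm.
  by rewrite (pos_len0 hlam) // hl S0.
move: hmu => /= /andP[k0 hmu]; move: hm; rewrite len_cons => hm.
have ks : k <= size S by lia.
have [p1 p2] := pos_take_drop k hS.
have m0 : 0 < len (take k S) by apply: pos_take_len.
have hS2 : len mu = size (drop k S) by rewrite size_drop; lia.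
have pmu2 : pos (dec (drop k S) mu) by apply: pos_dec => //; rewrite hS2.
apply/idP/idP => H.
  have pd : pos (dec S lam) by apply: pos_dec => //; rewrite hl.
  have ld : len (dec S lam) = len (take k S) + len (dec (drop k S) mu).
    by rewrite !len_dec hl hS2 !take_size -len_cat cat_take_drop.
  have [j [hjs hj hso hle2]] := split_le pd m0 pmu2 ld H.
  move: hj hso hle2; rewrite take_dec drop_dec len_dec single_ok_dec.
  have [q1 q2] := pos_take_drop j hlam.
  have tle : len (take j lam) <= size S by rewrite -hl len_take_le.
  move=> /(len_take_inj hS tle ks) e hso hle2; move: hle2; rewrite e => hle2.
  have ll2 : len (drop j lam) = size (drop k S).
    by move: hl; rewrite -{1}(cat_take_drop j lam) len_cat e size_drop; lia.
  rewrite IH // in hle2.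
  by rewrite -(cat_take_drop j lam) join_le.
have [j [hjs hj hso hle2]] := split_le hlam k0 hmu (etrans hl (esym hm)) H.
have [q1 q2] := pos_take_drop j hlam.
have ll2 : len (drop j lam) = size (drop k S).
  by move: hl; rewrite -{1}(cat_take_drop j lam) len_cat hj size_drop; lia.
rewrite -(cat_take_drop j lam) dec_cat hj /=.
apply: join_le => //.
- by apply: pos_dec => //; rewrite hj.
- by apply: pos_dec => //; rewrite ll2.
- by rewrite len_dec hj.
- by rewrite single_ok_dec.
by rewrite IH.
Qed.

Definition sing_ok s (c : seq G) P :=
  all (fun b => (b.1.2 == 1) ==> (b.2 == nth b.2 c b.1.1)) (blocks_from s P).

Lemma is_cpartE c P : is_cpart c P = [&& pos P, len P == size c & sing_ok 0 c P].
Proof. by rewrite /is_cpart andbA. Qed.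

Lemma len1 A : pos A -> len A = 1 -> exists g, A = [:: (1, g)].
Proof.
case: A => [|[a g] [|[b g'] A]] //=.
- by rewrite /len /= addn0 => _ ->; exists g.
by move=> /and3P[ha hb _]; rewrite !len_cons; lia.
Qed.

Lemma sing_le S L s c : pos S -> pos L -> len S = len L -> cp_le S L ->
  s + len L <= size c -> sing_ok s c S -> sing_ok s c L.
Proof.
elim: L S s => [|[l g] L IH] S s hS hL hl hle hsz hs //.
move: hL => /= /andP[l0 hL].
have [j [_ hj hso hle2]] := split_le hS l0 hL hl hle.
have [p1 p2] := pos_take_drop j hS.
move: hs; rewrite /sing_ok -(cat_take_drop j S) blocks_from_cat all_cat hj.
move=> /andP[hs1 hs2]; rewrite /=; apply/andP; split.
  apply/implyP => /eqP l1; move: hj hso hs1; rewrite l1 => hj.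
  have [g' ->] := len1 p1 hj; rewrite /= andbT => /eqP -> /=.
  by [].
apply: (IH (drop j S)) => //.
- by move: hl; rewrite -{1}(cat_take_drop j S) len_cat len_cons hj; lia.
- by move: hsz; rewrite len_cons; lia.
Qed.

Lemma pos_zero (v : seq G) : pos (zero_cp v).
Proof. by elim: v. Qed.

Lemma len_zero (v : seq G) : len (zero_cp v) = size v.
Proof. by elim: v => //= g v IH; rewrite len_cons IH. Qed.

Lemma sing_zero (w v : seq G) : sing_ok (size w) (w ++ v) (zero_cp v).
Proof.
elim: v w => [|g v IH] w //=.
rewrite /sing_ok /= nth_cat ltnn subnn /= eqxx /=.
have := IH (rcons w g); rewrite size_rcons cat_rcons addn1; exact.
Qed.

Lemma is_cpart_zero (v : seq G) : is_cpart v (zero_cp v).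
Proof. by rewrite is_cpartE pos_zero len_zero eqxx (sing_zero [::]). Qed.

Definition restr_col_from s S (C : nat * nat) : seq G :=
  [seq b.2 | b <- blocks_from s S & inside b.1 C].

Lemma colors_blocks s P : map snd (blocks_from s P) = cp_colors P.
Proof. by elim: P s => [|[a g] P IH] s //=; rewrite IH. Qed.

Lemma restr_first s S1 S2 : pos S1 -> pos S2 ->
  restr_col_from s (S1 ++ S2) (s, len S1) = cp_colors S1.
Proof.
move=> p1 p2; rewrite /restr_col_from blocks_from_cat filter_cat map_cat.
have -> : [seq b <- blocks_from (s + len S1) S2 | inside b.1 (s, len S1)] = [::].
  apply/eqP; rewrite -[_ == _]negbK -has_filter; apply/hasPn => b hb.
  have [h1 h2] := blocks_from_bound hb; have h3 := blocks_from_pos p2 hb.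
  by rewrite /inside /=; dlia.
rewrite cats0 (_ : filter _ _ = blocks_from s S1) ?colors_blocks //.
apply/all_filterP/allP => b hb; have [h1 h2] := blocks_from_bound hb.
by rewrite /inside /=; dlia.
Qed.

Lemma restr_rest s S1 S2 C : pos S1 -> pos S2 -> s + len S1 <= C.1 ->
  restr_col_from s (S1 ++ S2) C = restr_col_from (s + len S1) S2 C.
Proof.
move=> p1 p2 hC; rewrite /restr_col_from blocks_from_cat filter_cat map_cat.
have -> : [seq b <- blocks_from s S1 | inside b.1 C] = [::].
  apply/eqP; rewrite -[_ == _]negbK -has_filter; apply/hasPn => b hb.
  have [h1 h2] := blocks_from_bound hb; have h3 := blocks_from_pos p1 hb.
  by rewrite /inside /=; dlia.
by [].
Qed.

Lemma all2_eq_in (A : eqType) (B : Type) (p q : A -> B -> bool) xs ys :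
  (forall x y, x \in xs -> p x y = q x y) -> all2 p xs ys = all2 q xs ys.
Proof.
elim: xs ys => [|x xs IH] [|y ys] //= H.
by rewrite H ?mem_head // IH // => x' y' hx; apply: H; rewrite inE hx orbT.
Qed.

Definition prodY s S pi (Ls : seq (cpart G)) :=
  (size Ls == size pi) &&
  all2 (fun C L => in_Y (restr_col_from s S C.1) C.2 L) (blocks_from s pi) Ls.

Lemma in_prodYE S pi Ls : in_prodY S pi Ls = prodY 0 S pi Ls.
Proof. by []. Qed.

Lemma prodY_cons s S1 S2 h pi lam Ls : pos S1 -> pos S2 ->
  prodY s (S1 ++ S2) ((len S1, h) :: pi) (lam :: Ls) =
  in_Y (cp_colors S1) h lam && prodY (s + len S1) S2 pi Ls.
Proof.
move=> p1 p2; rewrite /prodY /= eqSS restr_first //.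
rewrite (@all2_eq_in _ _ _ (fun C L => in_Y (restr_col_from (s + len S1) S2 C.1) C.2 L)).
  by rewrite andbCA.
by move=> C L hC; rewrite restr_rest //; have [] := blocks_from_bound hC.
Qed.

Fixpoint th S pi L : seq (cpart G) :=
  match pi with
  | [::] => [::]
  | (m, h) :: pi' => comp (take (cnt m S) S) (take (cnt m L) L)
                     :: th (drop (cnt m S) S) pi' (drop (cnt m L) L)
  end.

Fixpoint ph S pi (Ls : seq (cpart G)) : cpart G :=
  match pi, Ls with
  | (m, h) :: pi', lam :: Ls' => dec (take (cnt m S) S) lam ++ ph (drop (cnt m S) S) pi' Ls'
  | _, _ => [::]
  end.

Lemma th_cons S1 S2 h pi L1 L2 : pos S1 -> pos L1 -> len L1 = len S1 ->
  th (S1 ++ S2) ((len S1, h) :: pi) (L1 ++ L2) = comp S1 L1 :: th S2 pi L2.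
Proof.
move=> p1 q1 e /=; rewrite cnt_cat // -e cnt_cat //.
by rewrite !take_size_cat // !drop_size_cat.
Qed.

Lemma ph_cons S1 S2 h pi lam Ls : pos S1 ->
  ph (S1 ++ S2) ((len S1, h) :: pi) (lam :: Ls) = dec S1 lam ++ ph S2 pi Ls.
Proof. by move=> p1 /=; rewrite cnt_cat // take_size_cat // drop_size_cat. Qed.

Arguments th : simpl never.
Arguments ph : simpl never.

Definition intv S pi L := [&& pos L, len L == len pi, cp_le S L & cp_le L pi].

Lemma intv_split S1 S2 h pi L : pos S1 -> pos S2 -> pos pi -> 0 < len S1 ->
  intv (S1 ++ S2) ((len S1, h) :: pi) L ->
  exists L1 L2, [/\ L = L1 ++ L2, len L1 = len S1, pos L1,
                    cp_le S1 L1 && single_ok L1 h & intv S2 pi L2].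
Proof.
move=> p1 p2 ppi m0 /and4P[pL /eqP lL le1 le2].
have [j [_ hj hso hle2]] := split_le pL m0 ppi lL le2.
have [q1 q2] := pos_take_drop j pL.
exists (take j L), (drop j L).
move: le1; rewrite -{1}(cat_take_drop j L) cp_le_cat // => /andP[a1 a2].
split => //; first by rewrite cat_take_drop.
  by rewrite a1.
rewrite /intv q2 a2 hle2 /= andbT.
by move: lL; rewrite -{1}(cat_take_drop j L) len_cat len_cons hj => /addnI ->.
Qed.

Lemma intv_join S1 S2 h pi L1 L2 : pos S1 -> pos S2 -> pos pi -> 0 < len S1 ->
  len L1 = len S1 -> pos L1 -> cp_le S1 L1 -> single_ok L1 h -> intv S2 pi L2 ->
  intv (S1 ++ S2) ((len S1, h) :: pi) (L1 ++ L2).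
Proof.
move=> p1 p2 ppi m0 e q1 a1 so /and4P[q2 /eqP l2 a2 b2].
rewrite /intv pos_cat q1 q2 len_cat len_cons e l2 eqxx cp_le_cat // a1 a2 /=.
exact: join_le.
Qed.

Section Single.
Variables (S1 : cpart G) (h : G).
Hypotheses (p1 : pos S1) (m0 : 0 < len S1).

Lemma size_S1 : 0 < size S1.
Proof. by move: m0; case: S1. Qed.

Lemma zero_facts : [/\ pos (zero_cp (cp_colors S1)), len (zero_cp (cp_colors S1)) = size S1
   & dec S1 (zero_cp (cp_colors S1)) = S1].
Proof. by rewrite pos_zero len_zero size_map dec_zero. Qed.

Lemma inY_iff lam : pos lam -> len lam = size S1 ->
  in_Y (cp_colors S1) h lam = cp_le S1 (dec S1 lam) && single_ok lam h.
Proof.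
move=> pl ll; have [z1 z2 z3] := zero_facts.
have E1 : cp_le S1 (dec S1 lam) = cp_le (zero_cp (cp_colors S1)) lam.
  by rewrite -{1}z3 dec_le.
have E2 : cp_le lam (one_cp (cp_colors S1) h) = single_ok lam h.
  by rewrite /one_cp size_map cp_le_single //; exact: size_S1.
have E3 : cp_le (zero_cp (cp_colors S1)) lam -> is_cpart (cp_colors S1) lam.
  move=> H; rewrite is_cpartE pl ll size_map eqxx /=.
  apply: (sing_le z1 pl) => //; first by rewrite z2.
  - by rewrite ll size_map.
  by have := sing_zero [::] (cp_colors S1).
rewrite /in_Y E2; case: (boolP (cp_le S1 (dec S1 lam))) => H.
  have H' : cp_le (zero_cp (cp_colors S1)) lam by rewrite -E1.
  by rewrite E3 // H'.
by rewrite -E1 (negbTE H) andbF.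
Qed.

Lemma sb1 L1 : pos L1 -> len L1 = len S1 -> cp_le S1 L1 -> single_ok L1 h ->
  in_Y (cp_colors S1) h (comp S1 L1) /\ dec S1 (comp S1 L1) = L1.
Proof.
move=> q1 e a so; have [lam [pl ll el]] := dec_surj p1 q1 e a.
rewrite el comp_dec // ?ll //; split => //.
by rewrite inY_iff // -el a -(single_ok_dec S1) -el so.
Qed.

Lemma sb2 lam : in_Y (cp_colors S1) h lam ->
  [/\ pos (dec S1 lam), len (dec S1 lam) = len S1,
      cp_le S1 (dec S1 lam) && single_ok (dec S1 lam) h & comp S1 (dec S1 lam) = lam].
Proof.
move=> H; have := H; rewrite /in_Y is_cpartE size_map => /andP[/and3P[pl /eqP ll _] _].
move: H; rewrite inY_iff // => /andP[a so].
split.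
- by apply: pos_dec => //; rewrite ll.
- by rewrite len_dec ll take_size.
- by rewrite a single_ok_dec.
by rewrite comp_dec // ll.
Qed.

Lemma sb3 L1 M1 : pos L1 -> len L1 = len S1 -> cp_le S1 L1 ->
  pos M1 -> len M1 = len S1 -> cp_le S1 M1 ->
  cp_le L1 M1 = cp_le (comp S1 L1) (comp S1 M1).
Proof.
move=> q1 e a r1 e' a'.
have [lam [pl ll ->]] := dec_surj p1 q1 e a.
have [mu [pm lm ->]] := dec_surj p1 r1 e' a'.
by rewrite !comp_dec ?ll ?lm // dec_le.
Qed.
End Single.

Lemma colors_cat P Q : cp_colors (P ++ Q) = cp_colors P ++ cp_colors Q.
Proof. exact: map_cat. Qed.

Lemma main pi : forall S s, pos S -> pos pi -> len S = len pi -> cp_le S pi ->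
 [/\ forall L, intv S pi L -> prodY s S pi (th S pi L) /\ ph S pi (th S pi L) = L,
     forall Ls, prodY s S pi Ls -> intv S pi (ph S pi Ls) /\ th S pi (ph S pi Ls) = Ls,
     forall L M, intv S pi L -> intv S pi M -> cp_le L M = prod_le (th S pi L) (th S pi M) &
     forall L, intv S pi L -> cp_colors L = flatten (map (@cp_colors G) (th S pi L))].
Proof.
elim: pi => [|[m h] pi IH] S s hS hpi hl hle.
  have S0 : S = [::] by apply: pos_len0.
  subst S.
  have L0 : forall L, intv [::] [::] L -> L = [::].
    by move=> L /and4P[pL /eqP lL _ _]; apply: pos_len0.
  split.
  - by move=> L /L0 ->.
  - by move=> Ls /andP[/eqP/size0nil -> _].
  - by move=> L M /L0 -> /L0 ->.
  by move=> L /L0 ->.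
move: hpi => /= /andP[m0 hpi].
have [j [_ hj _ hle2]] := split_le hS m0 hpi hl hle.
have [p1 p2] := pos_take_drop j hS.
have hl2 : len (drop j S) = len pi.
  by move: hl; rewrite -{1}(cat_take_drop j S) len_cat len_cons hj => /addnI.
have [A B C D] := IH (drop j S) (s + m) p2 hpi hl2 hle2.
rewrite -(cat_take_drop j S).
move: (take j S) (drop j S) hj p1 p2 hl2 hle2 A B C D => S1 S2 hj p1 p2 hl2 hle2 A B C D.
subst m.
split.
- move=> L /(intv_split p1 p2 hpi m0) [L1 [L2 [-> e q1 /andP[a so] iv]]].
  have [y1 y2] := sb1 p1 m0 q1 e a so.
  have [A1 A2] := A L2 iv.
  by rewrite th_cons // ph_cons // prodY_cons // y1 A1 y2 A2.
- case=> [|lam Ls]; first by rewrite /prodY.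
  rewrite prodY_cons // => /andP[hy hp].
  have [d1 d2 /andP[d3 d4] d5] := sb2 p1 m0 hy.
  have [B1 B2] := B Ls hp.
  rewrite ph_cons //; split; first exact: intv_join.
  by rewrite th_cons // d5 B2.
- move=> L M /(intv_split p1 p2 hpi m0) [L1 [L2 [-> e q1 /andP[a so] iv]]].
  move=> /(intv_split p1 p2 hpi m0) [M1 [M2 [-> e' r1 /andP[a' so'] iv']]].
  have pL2 : pos L2 by case/and4P: iv.
  have pM2 : pos M2 by case/and4P: iv'.
  have c1 := cnt_cat S2 p1.
  have cL : cnt (len S1) (L1 ++ L2) = size L1 by rewrite -e cnt_cat.
  have cM : cnt (len S1) (M1 ++ M2) = size M1 by rewrite -e' cnt_cat.
  rewrite ?th_cons // ?c1 ?cL ?cM ?take_size_cat // ?drop_size_cat //.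
  rewrite cp_le_cat ?e ?e' // (sb3 p1 q1 e a r1 e' a') (C L2 M2 iv iv').
  by rewrite /prod_le.
move=> L /(intv_split p1 p2 hpi m0) [L1 [L2 [-> e q1 /andP[a so] iv]]].
have c1 := cnt_cat S2 p1.
have cL : cnt (len S1) (L1 ++ L2) = size L1 by rewrite -e cnt_cat.
rewrite ?th_cons // ?c1 ?cL ?take_size_cat // ?drop_size_cat //.
by rewrite colors_cat /= colors_comp (D L2 iv).
Qed.

End S.

Theorem lemma1 (Gamma : finType) (c : seq Gamma) (sg pi : cpart Gamma) :
  is_cpart c sg -> is_cpart c pi -> cp_le sg pi ->
  exists theta : cpart Gamma -> seq (cpart Gamma),
    [/\ (forall L, in_interval c sg pi L -> in_prodY sg pi (theta L)),
        (forall L M, in_interval c sg pi L -> in_interval c sg pi M ->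
           theta L = theta M -> L = M),
        (forall Ls, in_prodY sg pi Ls ->
           exists2 L, in_interval c sg pi L & theta L = Ls),
        (forall L M, in_interval c sg pi L -> in_interval c sg pi M ->
           cp_le L M = prod_le (theta L) (theta M)) &
        (forall L, in_interval c sg pi L ->
           cp_colors L = flatten (map (@cp_colors Gamma) (theta L)))].
Proof.
rewrite !is_cpartE => /and3P[ps /eqP ls ss] /and3P[pp /eqP lp sp] hle.
have [A B C D] := main 0 ps pp (etrans ls (esym lp)) hle.
have E : forall L, in_interval c sg pi L = intv sg pi L.
  move=> L; rewrite /in_interval /intv is_cpartE lp.
  apply/idP/idP.
    by move=> /and3P[/and3P[-> -> _] -> ->].
  move=> /and4P[pL /eqP lL a b]; rewrite pL lL eqxx a b /= andbT.
  apply: (sing_le ps pL) => //; first by rewrite lL.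
  by rewrite lL.
exists (th sg pi); split.
- by move=> L; rewrite E in_prodYE => /A [].
- move=> L M; rewrite !E => hL hM e.
  by have [_ <-] := A L hL; have [_ <-] := A M hM; rewrite e.
- move=> Ls; rewrite in_prodYE => /B [h1 h2].
  by exists (ph sg pi Ls); rewrite ?E.
- by move=> L M; rewrite !E; exact: C.
by move=> L; rewrite E; exact: D.
Qed.
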